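(* Let $m$ be odd and let $f:\mathbb{Z}_m\to\{\pm1,\pm\mathrm{i}\}$ be an OQS. Then $R_f(w)\in\{1,-1\}$ (in particular $R_f(w)$ is real) for all $1\le w\le m-1$.
   Context: $\mathrm{i}=\sqrt{-1}$. For $f:\mathbb{Z}_m\to\mathbb{C}$, $R_f(w)=\sum_{k\in\mathbb{Z}_m}f(k)\overline{f(k+w)}$. A quaternary sequence $f:\mathbb{Z}_m\to\{\pm1,\pm\mathrm{i}\}$ of odd length $m$ is an OQS if $|R_f(w)|=1$ for all $1\le w\le m-1$. *)

(* Defs.v *)
(* complex numbers modelled by algC (algebraic complex numbers),
   which contains 'i and all values of interest. *)
From HB Require Import structures.
From mathcomp Require Import all_boot all_order all_algebra all_field.
Set Implicit Arguments. Unset Strict Implicit. Unset Printing Implicit Defensive.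
Import Order.TTheory GRing.Theory Num.Theory.
Local Open Scope ring_scope.

(* Z_m is represented by 'I_m with addition modulo m. *)
Lemma ord_pos (m : nat) (k : 'I_m) : (0 < m)%N.
Proof. exact: leq_ltn_trans (leq0n k) (ltn_ord k). Qed.

Definition zadd (m : nat) (k : 'I_m) (w : nat) : 'I_m :=
  Ordinal (ltn_pmod (k + w)%N (ord_pos k)).

Definition autocorr (m : nat) (f : 'I_m -> algC) (w : nat) : algC :=
  \sum_(k < m) f k * (f (zadd k w))^*.

Definition quaternary (m : nat) (f : 'I_m -> algC) : Prop :=
  forall k, f k \in [:: 1; -1; 'i; - 'i].

Definition OQS (m : nat) (f : 'I_m -> algC) : Prop :=
  [/\ odd m, quaternary f &
      forall w : nat, (1 <= w <= m.-1)%N -> `|autocorr f w| = 1].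

(* Main.v *)
Require Import Defs.
From HB Require Import structures.
From mathcomp Require Import all_boot all_order all_algebra all_field.
From mathcomp Require Import zify ring.
Import Order.TTheory GRing.Theory Num.Theory.
Local Open Scope ring_scope.

Definition pa (n : nat) : int := if odd n then 0 else (-1) ^+ (n./2).
Definition pb (n : nat) : int := if odd n then (-1) ^+ (n./2) else 0.

Lemma iexp3 : 'i ^+ 3 = - 'i :> algC.
Proof. by rewrite exprS sqrCi mulrN1. Qed.

Lemma idecomp (n : nat) : 'i ^+ n = (pa n)%:~R + 'i * (pb n)%:~R :> algC.
Proof.
rewrite -[in LHS](odd_double_half n) exprD -mul2n exprM sqrCi /pa /pb.
have E : ((-1) ^+ n./2 : int)%:~R = (-1) ^+ n./2 :> algC.
  by rewrite rmorphXn /= rmorphN1.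
by case: (odd n); rewrite ?expr1 ?expr0 E ?mulr0 ?addr0 ?add0r ?mul1r // mulrC.
Qed.

Lemma par_b (n : nat) : (2 %| pb n - n%:Z)%Z.
Proof.
have h := odd_double_half n.
rewrite /pb -signr_odd.
case: (odd n) h => h; case: (odd n./2); rewrite ?expr1 ?expr0 /=; lia.
Qed.

Lemma par_ab (n : nat) : (2 %| pa n + pb n - 1)%Z.
Proof.
rewrite /pa /pb -signr_odd.
case: (odd n); case: (odd n./2); rewrite ?expr1 ?expr0 /=; lia.
Qed.

Lemma conj_iexp (n : nat) : ('i ^+ n)^* = 'i ^+ (3 * n) :> algC.
Proof. by rewrite rmorphXn /= conjCi exprM iexp3. Qed.

Lemma zadd_inj (m w : nat) : injective (fun k : 'I_m => zadd k w).
Proof.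
move=> k k' /(congr1 val) /= /eqP.
rewrite eqn_modDr !modn_small // => /eqP h; exact: val_inj.
Qed.

Lemma sum_even (m : nat) (F : 'I_m -> int) :
  (forall k, (2 %| F k)%Z) -> (2 %| \sum_k F k)%Z.
Proof.
move=> H; elim/big_rec: _ => // i x _ hx; have := H i; lia.
Qed.

Lemma cplx_sq (a b : algC) : (a + 'i * b) * (a - 'i * b) = a * a + b * b.
Proof.
have H : (a + 'i * b) * (a - 'i * b) - (a * a + b * b) = - (b * b) * ('i * 'i + 1).
  ring.
have Hi : 'i * 'i + 1 = 0 :> algC by rewrite -expr2 sqrCi addNr.
by apply/eqP; rewrite -subr_eq0 H Hi mulr0.
Qed.

Theorem corollary2 (m : nat) (f : 'I_m -> algC) :
  odd m -> OQS f ->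
  forall w : nat, (1 <= w <= m.-1)%N ->
    autocorr f w = 1 \/ autocorr f w = -1.
Proof.
move=> oddm [_ hq hR] w hw.
have Hex : forall k, exists n, f k == 'i ^+ n.
  move=> k; have := hq k; rewrite !inE => /or4P [] /eqP ->.
  - by exists 0%N.
  - by exists 2%N; rewrite sqrCi.
  - by exists 1%N; rewrite expr1.
  - by exists 3%N; rewrite iexp3.
pose e k := xchoose (Hex k).
have fe : forall k, f k = 'i ^+ e k by move=> k; apply/eqP; exact: (xchooseP (Hex k)).
pose n k := (e k + 3 * e (zadd k w))%N.
pose A := \sum_k pa (n k).
pose B := \sum_k pb (n k).
have RE : autocorr f w = A%:~R + 'i * B%:~R.
  rewrite /autocorr /A /B !rmorph_sum mulr_sumr -big_split /=.
  apply: eq_bigr => k _; by rewrite !fe conj_iexp -exprD idecomp.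
have sumn : (\sum_k n k = 4 * \sum_k e k)%N.
  rewrite /n big_split /= -big_distrr /=.
  rewrite -(reindex_inj (zadd_inj m w) (P := xpredT) (F := e)) /=.
  lia.
have hB : (2 %| B - (\sum_k n k)%N%:Z)%Z.
  rewrite (big_morph (fun x : nat => x%:Z) PoszD (erefl 0%Z)) /B -sumrB.
  by apply: sum_even => k; apply: par_b.
have hAB : (2 %| A + B - m%:Z)%Z.
  have -> : A + B - m%:Z = \sum_k (pa (n k) + pb (n k) - 1).
    rewrite !sumrB big_split /= sumr_const card_ord /A /B.
    by rewrite natz.
  by apply: sum_even => k; apply: par_ab.
have hm := odd_double_half m; rewrite oddm in hm.
have N1 : A * A + B * B = 1.
  apply: (@intr_inj algC).
  have := hR w hw; rewrite RE => h.
  have := normCK (A%:~R + 'i * B%:~R : algC); rewrite h expr1n.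
  rewrite conjC_rect ?realz // cplx_sq => h2.
  by rewrite rmorphD /= !rmorphM /= -h2 rmorph1.
have B0 : B = 0 by nia.
have A1 : A = 1 \/ A = -1 by nia.
by rewrite RE B0 mulr0 addr0; case: A1 => ->; [left | right; rewrite rmorphN1].
Qed.
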